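(* For any $n\ge 1$, the Hochschild lattice $(\mathsf{Tr}(n),\preccurlyeq)$ is constructible by interval doubling.
   Context: A triword of size $n$ is a word $u=u_1\cdots u_n$ with $u_i\in\{0,1,2\}$, $u_1\ne 2$, and such that $u_i=0$ implies $u_j\neq 1$ for all $j>i$; $\mathsf{Tr}(n)$ is their set, ordered componentwise ($u\preccurlyeq v$ iff $u_i\le v_i$ for all $i$). Let $\mathbf{2}=\{0<1\}$. For a poset $\mathcal{P}$ and an interval $I$ of $\mathcal{P}$, the interval doubling $\mathcal{P}[I]:=(\mathcal{P}\setminus I)\cup(I\times\mathbf{2})$ is ordered by: $x\preccurlyeq' y$ iff either $x,y\in\mathcal{P}\setminus I$ and $x\preccurlyeq y$; or $x\in\mathcal{P}\setminus I$, $y=(y',b)$ and $x\preccurlyeq y'$; or $x=(x',a)$, $y\in\mathcal{P}\setminus I$ and $x'\preccurlyeq y$; or $x=(x',a)$, $y=(y',b)$, $x'\preccurlyeq y'$ and $a\le b$. A lattice is constructible by interval doubling if it is isomorphic to a poset obtained from the one-element lattice by a finite sequence of interval doublings. *)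

(* Defs.v *)
From mathcomp Require Import all_boot.
Set Implicit Arguments. Unset Strict Implicit. Unset Printing Implicit Defensive.

(* A word u_1...u_n over {0,1,2} is a finite function 'I_n -> 'I_3;
   position i (0-based here) corresponds to u_{i+1}. *)
Definition triword (n : nat) (u : {ffun 'I_n -> 'I_3}) : bool :=
  [forall i : 'I_n, (val i == 0) ==> (val (u i) != 2)] &&
  [forall i : 'I_n, forall j : 'I_n,
     ((i < j) && (val (u i) == 0)) ==> (val (u j) != 1)].

Definition Tr (n : nat) : finType := {u : {ffun 'I_n -> 'I_3} | triword u}.

Definition trle (n : nat) : rel (Tr n) :=
  fun u v => [forall i : 'I_n, nat_of_ord ((val u) i) <= nat_of_ord ((val v) i)].

Definition is_interval (T : finType) (le : rel T) (I : {set T}) : Prop :=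
  exists a b : T, le a b /\ I = [set x | le a x && le x b].

(* P[I] := (P \ I) u (I x 2) *)
Definition dbl_type (T : finType) (I : {set T}) : finType :=
  ({x : T | x \notin I} + ({x : T | x \in I} * bool))%type.

Definition dbl_le (T : finType) (le : rel T) (I : {set T}) : rel (dbl_type I) :=
  fun x y =>
    match x, y with
    | inl x', inl y' => le (val x') (val y')
    | inl x', inr (y', _) => le (val x') (val y')
    | inr (x', _), inl y' => le (val x') (val y')
    | inr (x', a), inr (y', b) => le (val x') (val y') && (a ==> b) (* a <= b in 2 = {false < true} *)
    end.

Inductive obtained_by_doubling : forall T : finType, rel T -> Prop :=
| obt_one : obtained_by_doubling (fun _ _ : unit => true)
| obt_double : forall (T : finType) (le : rel T) (I : {set T}),
    obtained_by_doubling le -> is_interval le I ->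
    obtained_by_doubling (@dbl_le T le I).

Definition constructible_by_doubling (T : finType) (le : rel T) : Prop :=
  exists (T' : finType) (le' : rel T') (f : T' -> T),
    obtained_by_doubling le' /\ bijective f /\
    (forall x y, le' x y = le (f x) (f y)).

(* Main.v *)
Require Import Defs.
From mathcomp Require Import all_boot.
Set Implicit Arguments. Unset Strict Implicit. Unset Printing Implicit Defensive.

Lemma emb_bij (T S : finType) (le : rel T) (leS : rel S) (h : T -> S) :
  antisymmetric le -> reflexive leS -> (forall x y, le x y = leS (h x) (h y)) ->
  (forall s, exists t, h t = s) -> bijective h.
Proof.
move=> anti refl Hle Hs.
have hinj : injective h.
  by move=> x y e; apply: anti; rewrite !Hle e refl.
apply: inj_card_bij => //.
rewrite -cardsT -(cardsT T).
have -> : [set: S] = h @: [set: T].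
  apply/setP => s; rewrite inE; case: (Hs s) => t <-.
  by apply/esym/imsetP; exists t; rewrite ?inE.
exact: leq_imset_card.
Qed.

Lemma iso_constr (T S : finType) (le : rel T) (leS : rel S) (h : T -> S) :
  constructible_by_doubling le -> bijective h -> (forall x y, le x y = leS (h x) (h y)) ->
  constructible_by_doubling leS.
Proof.
case=> [T' [le' [f [Ho [Hf Hle]]]]] Hh Hl.
exists T', le', (h \o f); split=> //; split; first exact: bij_comp.
by move=> x y; rewrite Hle Hl.
Qed.

Lemma dbl_constr (T : finType) (le : rel T) (I : {set T}) :
  constructible_by_doubling le -> is_interval le I -> constructible_by_doubling (@dbl_le _ le I).
Proof.
case=> [T' [le' [f [Ho [[g fK gK] Hle]]]]] [a [b [Hab EI]]].
pose I' := [set x | le' (g a) x && le' x (g b)].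
have HI : forall x, (x \in I') = (f x \in I).
  by move=> x; rewrite EI !inE !Hle !gK.
have H1 : forall x, x \notin I' -> f x \notin I by move=> x; rewrite HI.
have H2 : forall x, x \in I' -> f x \in I by move=> x; rewrite HI.
have G1 : forall y, y \notin I -> g y \notin I' by move=> y; rewrite HI gK.
have G2 : forall y, y \in I -> g y \in I' by move=> y; rewrite HI gK.
pose F (z : dbl_type I') : dbl_type I := match z with
 | inl x => inl (exist _ (f (val x)) (H1 _ (valP x)))
 | inr (x, c) => inr (exist _ (f (val x)) (H2 _ (valP x)), c) end.
pose G (z : dbl_type I) : dbl_type I' := match z with
 | inl x => inl (exist _ (g (val x)) (G1 _ (valP x)))
 | inr (x, c) => inr (exist _ (g (val x)) (G2 _ (valP x)), c) end.
exists (dbl_type I'), (@dbl_le _ le' I'), F; split; last split.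
- apply: obt_double => //; exists (g a), (g b); split => //.
  by rewrite Hle !gK.
- exists G.
  + case=> [x|[x c]] /=; congr (_ _); try congr (_, _); apply: val_inj => /=; exact: fK.
  + case=> [x|[x c]] /=; congr (_ _); try congr (_, _); apply: val_inj => /=; exact: gK.
- by case=> [x|[x c]] [y|[y d]] /=; rewrite Hle.
Qed.

Lemma step_constr (T S : finType) (le : rel T) (leS : rel S) (I : {set T})
  (h : dbl_type I -> S) :
  constructible_by_doubling le -> is_interval le I -> bijective h ->
  (forall x y, @dbl_le _ le I x y = leS (h x) (h y)) -> constructible_by_doubling leS.
Proof. by move=> C HI; apply: iso_constr; apply: dbl_constr. Qed.

Lemma dbl_anti (T : finType) (le : rel T) (I : {set T}) :
  antisymmetric le -> antisymmetric (@dbl_le _ le I).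
Proof.
move=> anti.
case=> [x|[x a]] [y|[y b]] /=.
- by move/anti => e; congr (_ _); apply: val_inj.
- move=> H; have e := anti _ _ H; move: (valP x) (valP y) => /= Hx Hy.
  by move: Hx; rewrite e Hy.
- move=> H; have e := anti _ _ H; move: (valP x) (valP y) => /= Hx Hy.
  by move: Hy; rewrite -e Hx.
- case/andP=> /andP[h1 h2] /andP[h3 h4]. 
  have e : val x = val y by apply: anti; rewrite h1 h3.
  have -> : x = y by apply: val_inj.
  by case: a b h2 h4 => [] [].
Qed.

Definition c0 : 'I_3 := @Ordinal 3 0 isT.
Definition c1 : 'I_3 := @Ordinal 3 1 isT.
Definition c2 : 'I_3 := @Ordinal 3 2 isT.

Lemma tw_bot n : triword [ffun _ : 'I_n => c0].
Proof.
apply/andP; split.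
  by apply/forallP => i; rewrite ffunE /= ?implybT.
apply/forallP => i; apply/forallP => j; by rewrite !ffunE /= ?andbF ?implybT.
Qed.
Lemma tw_ones n : triword [ffun _ : 'I_n => c1].
Proof.
apply/andP; split.
  by apply/forallP => i; rewrite ffunE /= ?implybT.
apply/forallP => i; apply/forallP => j; by rewrite !ffunE /= ?andbF ?implybT.
Qed.
Lemma tw_top n : triword [ffun i : 'I_n => if val i == 0 then c1 else c2].
Proof.
apply/andP; split.
  by apply/forallP => i; rewrite ffunE; case: (val i == 0); rewrite /= ?implybT.
apply/forallP => i; apply/forallP => j; rewrite !ffunE.
by case: (val i == 0); case: (val j == 0); rewrite /= ?andbF.
Qed.

Definition trbot n : Tr n := exist (fun u => triword u) _ (tw_bot n).
Definition trones n : Tr n := exist (fun u => triword u) _ (tw_ones n).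
Definition trtop n : Tr n := exist (fun u => triword u) _ (tw_top n).

Lemma trle_refl n : reflexive (@trle n).
Proof. by move=> u; apply/forallP. Qed.
Lemma trle_trans n : transitive (@trle n).
Proof.
move=> v u w /forallP H1 /forallP H2; apply/forallP => i.
exact: leq_trans (H1 i) (H2 i).
Qed.
Lemma trle_anti n : antisymmetric (@trle n).
Proof.
move=> u v /andP[/forallP H1 /forallP H2]; apply: val_inj; apply/ffunP => i.
by apply: val_inj; apply/eqP; rewrite eqn_leq H1 H2.
Qed.
Lemma trle_bot n (x : Tr n) : trle (trbot n) x.
Proof. by apply/forallP => i; rewrite /= ffunE. Qed.
Lemma trle_top n (x : Tr n) : trle x (trtop n).
Proof.
apply/forallP => i; rewrite /= ffunE.
case: eqP => [e|_]; last by case: (val x i) => [[|[|[|]]]].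
case/andP: (valP x) => /forallP /(_ i) + _.
by move/implyP => /(_ (introT eqP e)); case: (val x i) => [[|[|[|]]]].
Qed.

Lemma interval_T n : is_interval (@trle n) [set: Tr n].
Proof.
exists (trbot n), (trtop n); split; first exact: trle_top.
by apply/setP => x; rewrite !inE trle_bot trle_top.
Qed.

Lemma lift_maxv n (j : 'I_n) : val (lift (@ord_max n) j) = val j.
Proof. exact: lift_max. Qed.
Lemma ord_maxv n : val (@ord_max n) = n.
Proof. by []. Qed.

Definition extw n (x : {ffun 'I_n -> 'I_3}) (k : 'I_3) : {ffun 'I_n.+1 -> 'I_3} :=
  [ffun i => if unlift ord_max i is Some j then x j else k].
Definition prefw n (v : {ffun 'I_n.+1 -> 'I_3}) : {ffun 'I_n -> 'I_3} :=
  [ffun j => v (lift ord_max j)].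
Definition ext n (x : Tr n) k : Tr n.+1 := insubd (trbot n.+1) (extw (val x) k).
Definition pre n (v : Tr n.+1) : Tr n := insubd (trbot n) (prefw (val v)).

Definition valid n (x : Tr n) (k : 'I_3) :=
  ((n == 0) ==> (val k != 2)) && ((val k == 1) ==> trle (trones n) x).

Lemma tw_ext n (x : Tr n) k : valid x k -> triword (extw (val x) k).
Proof.
case/andP=> V1 V2; case/andP: (valP x) => /forallP T1 /forallP T2.
apply/andP; split; apply/forallP => i; rewrite ffunE.
  case: unliftP => [j ->|->]; first by rewrite lift_maxv; apply: T1.
  by rewrite ord_maxv; apply/implyP => /eqP e; move: V1; rewrite e.
apply/forallP => j; rewrite ffunE.
case: unliftP => [i' ->|->]; case: unliftP => [j' ->|->]; rewrite ?ltnn //.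
- by rewrite !lift_max; move/forallP: (T2 i') => /(_ j').
- apply/implyP => /andP[_ /eqP h0]; apply/negP => /eqP hk.
  move: V2; rewrite hk /= => /forallP /(_ i'); rewrite /= ffunE h0.
  by [].
- by rewrite lift_max ltnNge ltnW /=.
Qed.

Lemma val_ext n (x : Tr n) k : valid x k -> val (ext x k) = extw (val x) k.
Proof. by move=> V; rewrite /ext insubdK //; apply: tw_ext. Qed.

Lemma tw_pre n (v : Tr n.+1) : triword (prefw (val v)).
Proof.
case/andP: (valP v) => /forallP T1 /forallP T2.
apply/andP; split; apply/forallP => i; rewrite ffunE.
  by have := T1 (lift ord_max i); rewrite lift_maxv.
apply/forallP => j; rewrite ffunE.
by move/forallP: (T2 (lift ord_max i)) => /(_ (lift ord_max j)); rewrite !lift_max.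
Qed.

Lemma val_pre n (v : Tr n.+1) : val (pre v) = prefw (val v).
Proof. by rewrite /pre insubdK //; apply: tw_pre. Qed.

Lemma ext_pre n (v : Tr n.+1) : ext (pre v) (val v ord_max) = v.
Proof.
apply: val_inj; rewrite /ext.
have -> : extw (val (pre v)) (val v ord_max) = val v.
  apply/ffunP => i; rewrite ffunE val_pre.
  by case: unliftP => [j ->|->]; rewrite ?ffunE.
by rewrite insubdK //; apply: (valP v).
Qed.

Lemma trle_ext n (x y : Tr n) k l : valid x k -> valid y l ->
  trle (ext x k) (ext y l) = trle x y && (k <= l).
Proof.
move=> Vx Vy; rewrite /trle val_ext // val_ext //.
apply/forallP/andP => [H|[/forallP H1 H2] i].
  split; last by have := H ord_max; rewrite !ffunE unlift_none.
  by apply/forallP => j; have := H (lift ord_max j); rewrite !ffunE liftK.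
by case: (unliftP ord_max i) => [j|] ->; rewrite !ffunE ?liftK ?unlift_none.
Qed.

Lemma pre_ones n (v : Tr n.+2) : val (val v ord_max) == 1 -> trle (trones n.+1) (pre v).
Proof.
move=> /eqP h1; apply/forallP => j; rewrite val_pre !ffunE.
case/andP: (valP v) => _ /forallP /(_ (lift ord_max j)) /forallP /(_ ord_max).
rewrite h1 /= /bump (leqNgt n.+1 j) (ltn_ord j) add0n (ltn_ord j) /=.
by case: (val v (lift ord_max j)) => [[|]].
Qed.

Definition xsT n (x : Tr n) : {y : Tr n | y \in [set: Tr n]} :=
  exist (fun y => y \in [set: Tr n]) x (in_setT x).

Lemma noinl n (w : {x : Tr n | x \notin [set: Tr n]}) : False.
Proof. by case: w => w; rewrite in_setT. Qed.

Lemma constr0 : constructible_by_doubling (@trle 0).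
Proof.
exists unit, (fun _ _ => true), (fun _ => trbot 0); split; first exact: obt_one.
split.
  exists (fun _ => tt); first by case.
  by move=> x; apply: val_inj; apply/ffunP => i; have := ltn_ord i; rewrite ltn0.
by move=> _ _; apply/esym/forallP => i; have := ltn_ord i; rewrite ltn0.
Qed.

Definition hA (z : dbl_type [set: Tr 0]) : Tr 1 := match z with
 | inl _ => trbot 1 | inr (x, b) => ext (val x) (if b then c1 else c0) end.

Lemma validA (x : Tr 0) (b : bool) : valid x (if b then c1 else c0).
Proof. by case: b; apply/andP; split => //; apply/implyP => _; apply/forallP => i; have := ltn_ord i; rewrite ltn0. Qed.

Lemma constrA : constructible_by_doubling (@trle 0) -> constructible_by_doubling (@trle 1).
Proof.
move=> C.
have Hemb : forall x y, @dbl_le _ (@trle 0) [set: Tr 0] x y = trle (hA x) (hA y).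
  case=> [w|[x a]] [w'|[y b]]; try by [case: (noinl w)|case: (noinl w')].
  by rewrite /= trle_ext ?validA //; case: a; case: b.
apply: (step_constr (h := hA) C (interval_T 0)) => //.
apply: (emb_bij (le := @dbl_le _ (@trle 0) [set: Tr 0]) (leS := @trle 1)) => //.
- by apply: dbl_anti; exact: trle_anti.
- exact: trle_refl.
- move=> v; exists (inr (xsT (pre v), val (val v ord_max) == 1)).
  apply: etrans (ext_pre v); rewrite /=; congr ext; apply: val_inj => /=.
  case/andP: (valP v) => /forallP /(_ ord_max) H _.
  by move: H; case: (val v ord_max) => [[|[|[|]]] ?].
Qed.

Definition aJ N : dbl_type [set: Tr N] := inr (xsT (trones N), false).
Definition bJ N : dbl_type [set: Tr N] := inr (xsT (trtop N), false).
Definition JJ N : {set dbl_type [set: Tr N]} :=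
  [set z | @dbl_le _ (@trle N) [set: Tr N] (aJ N) z && @dbl_le _ (@trle N) [set: Tr N] z (bJ N)].

Lemma JJ_inr N (x : {y : Tr N | y \in [set: Tr N]}) c :
  (inr (x, c) \in JJ N) = trle (trones N) (val x) && ~~ c.
Proof. by rewrite inE /= trle_top andbT; case: c; rewrite ?andbF ?andbT. Qed.

Lemma interval_J N : is_interval (@dbl_le _ (@trle N) [set: Tr N]) (JJ N).
Proof. by exists (aJ N), (bJ N); split => //=; rewrite trle_top. Qed.

Definition hB N (z : dbl_type (JJ N)) : Tr N.+1 := match z with
 | inl w => match val w with inl _ => trbot _ | inr (x, c) => ext (val x) (if c then c2 else c0) end
 | inr (w, b) => match val w with inl _ => trbot _ | inr (x, _) => ext (val x) (if b then c1 else c0) end end.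

Lemma validB0 m (x : Tr m.+1) (c : bool) : valid x (if c then c2 else c0).
Proof. by case: c. Qed.
Lemma validB1 m (x : Tr m.+1) (c : bool) : trle (trones _) x -> valid x (if c then c1 else c0).
Proof. by case: c => H; rewrite /valid /= ?H. Qed.

Lemma constrB m : constructible_by_doubling (@trle m.+1) -> constructible_by_doubling (@trle m.+2).
Proof.
move=> C.
have C2 := dbl_constr C (interval_T m.+1).
set le2 := @dbl_le _ (@trle m.+1) [set: Tr m.+1].
have Hemb : forall x y, @dbl_le _ le2 (JJ m.+1) x y = trle (hB x) (hB y).
  case=> [[[w|[x c]] Hx]|[[[w|[x c]] Hx] a]] [[[w'|[y d]] Hy]|[[[w'|[y d]] Hy] b]];
    try by [case: (noinl w)|case: (noinl w')].
  - rewrite /=; clear Hx Hy; by rewrite /= trle_ext ?validB0 //; case: c; case: d; rewrite /= ?andbF ?andbT.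
  - rewrite /=; move: Hy; rewrite JJ_inr => /andP[Hy /negbTE ->].
    clear Hx; by rewrite /= trle_ext ?validB0 ?validB1 //; case: c; case: b; rewrite /= ?andbF ?andbT.
  - rewrite /=; move: Hx; rewrite JJ_inr => /andP[Hx /negbTE ->].
    rewrite /= trle_ext ?validB0 ?validB1 //.
    move: Hy; rewrite JJ_inr; case: a; case: d; rewrite /= ?andbF ?andbT; try by [].
    move=> Hy.
    by apply/negbTE; apply: contra Hy => H; apply: trle_trans H.
  - rewrite /=; move: Hx; rewrite JJ_inr => /andP[Hx /negbTE ->].
    move: Hy; rewrite JJ_inr => /andP[Hy /negbTE ->].
    by rewrite /= trle_ext ?validB1 //; case: a; case: b; rewrite /= ?andbF ?andbT.
apply: (step_constr (h := @hB m.+1) C2 (interval_J m.+1)) => //.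
apply: (emb_bij (le := @dbl_le _ le2 (JJ m.+1)) (leS := @trle m.+2)) => //.
- apply: dbl_anti; apply: dbl_anti; exact: trle_anti.
- exact: trle_refl.
- move=> v; move: (ext_pre v) (@pre_ones m v).
  case: (val v ord_max) => [[|[|[|//]]] Hk] /= E P1.
  + case T: (trle (trones m.+1) (pre v)).
    * have H : inr (xsT (pre v), false) \in JJ m.+1 by rewrite JJ_inr T.
      exists (inr (@exist _ (fun z => z \in JJ m.+1) _ H, false)).
      by apply: etrans E; rewrite /=; congr ext; apply: val_inj.
    * have H : inr (xsT (pre v), false) \notin JJ m.+1 by rewrite JJ_inr T.
      exists (inl (@exist _ (fun z => z \notin JJ m.+1) _ H)).
      by apply: etrans E; rewrite /=; congr ext; apply: val_inj.
  + have H : inr (xsT (pre v), false) \in JJ m.+1 by rewrite JJ_inr P1.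
    exists (inr (@exist _ (fun z => z \in JJ m.+1) _ H, true)).
    by apply: etrans E; rewrite /=; congr ext; apply: val_inj.
  + have H : inr (xsT (pre v), true) \notin JJ m.+1 by rewrite JJ_inr andbF.
    exists (inl (@exist _ (fun z => z \notin JJ m.+1) _ H)).
    by apply: etrans E; rewrite /=; congr ext; apply: val_inj.
Qed.

Lemma constr_all n : constructible_by_doubling (@trle n).
Proof.
elim: n => [|[|m] IH]; first exact: constr0.
- exact: constrA.
- exact: constrB.
Qed.

Theorem theorem2p3 (n : nat) : 0 < n -> constructible_by_doubling (@trle n).
Proof. by move=> _; apply: constr_all. Qed.
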